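(* Let $\sigma : S \to A$ and $\tau : T \to A^\perp$ be two backward sequential strategies, where $A$ is a forest (e.g. obtained from arenas). Then the pullback $S \circledast T$ of $\sigma$ and $\tau$ is backward sequential as well.
   Context: $e \rightarrow e'$ denotes immediate causal dependency ($e<e'$ with nothing strictly between). A strategy $\sigma:S\to A$ between event structures with polarities is a map of esps which is courteous (if $s_1 \rightarrow s_2$ with $\mathrm{pol}(s_1)=+$ or $\mathrm{pol}(s_2)=-$ then $\sigma s_1 \rightarrow \sigma s_2$) and receptive. An event structure $S$ is backward sequential if for every $s\in S$, $[s]=\{s'\mid s'\le s\}$ is a total order. The pullback $S\circledast T$ is the event structure of primes $[(s,t)]_x$ of the product stable family $\mathcal{C}(S)\times\mathcal{C}(T)$ restricted to pairs with $\sigma s=\tau t$; in it, $[(s,t)]_x \rightarrow [(s',t')]_x$ implies $s \rightarrow s'$ or $t \rightarrow t'$. *)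

(* Defs.v *)
From Stdlib Require Import List.
Import ListNotations.
Set Implicit Arguments.

(** Event structures with polarity (Winskel-style, consistency on finite sets,
    finite sets represented by lists).  [pol e = true] means positive. *)
Record ESP := {
  ev : Type;
  le : ev -> ev -> Prop;
  con : list ev -> Prop;
  pol : ev -> bool;
  le_refl : forall e, le e e;
  le_trans : forall e1 e2 e3, le e1 e2 -> le e2 e3 -> le e1 e3;
  le_antisym : forall e1 e2, le e1 e2 -> le e2 e1 -> e1 = e2;
  down_finite : forall e, exists l : list ev, forall e', le e' e -> In e' l;
  con_single : forall e, con [e];
  con_sub : forall l l', con l -> incl l' l -> con l';
  con_down : forall l e e', con l -> In e' l -> le e e' -> con (e :: l)
}.

Definition dual (A : ESP) : ESP :=
  {| ev := ev A; le := @le A; con := @con A; pol := fun a => negb (pol A a);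
     le_refl := @le_refl A; le_trans := @le_trans A; le_antisym := @le_antisym A;
     down_finite := @down_finite A; con_single := @con_single A;
     con_sub := @con_sub A; con_down := @con_down A |}.

Definition lt (E : ESP) (e e' : ev E) : Prop := le E e e' /\ e <> e'.
Definition imm (E : ESP) (e e' : ev E) : Prop :=
  lt E e e' /\ ~ (exists e'', lt E e e'' /\ lt E e'' e').

Definition config (E : ESP) (x : ev E -> Prop) : Prop :=
  (exists l : list (ev E), forall e, x e <-> In e l) /\
  (forall e e', x e' -> le E e e' -> x e) /\
  (forall l : list (ev E), (forall e, In e l -> x e) -> con E l).

Definition image (X Y : Type) (f : X -> Y) (x : X -> Prop) : Y -> Prop :=
  fun y => exists u, x u /\ f u = y.

Record Map (E1 E2 : ESP) := {
  fn :> ev E1 -> ev E2;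
  map_config : forall x, config E1 x -> config E2 (image fn x);
  map_locinj : forall x e e', config E1 x -> x e -> x e' -> fn e = fn e' -> e = e';
  map_pol : forall e, pol E2 (fn e) = pol E1 e
}.

Definition courteous (S A : ESP) (sigma : Map S A) : Prop :=
  forall s1 s2, imm S s1 s2 ->
    (pol S s1 = true \/ pol S s2 = false) -> imm A (sigma s1) (sigma s2).

Definition receptive (S A : ESP) (sigma : Map S A) : Prop :=
  forall (x : ev S -> Prop) (a : ev A),
    config S x -> pol A a = false -> ~ image sigma x a ->
    config A (fun a' => image sigma x a' \/ a' = a) ->
    exists s, (~ x s /\ config S (fun s' => x s' \/ s' = s) /\ sigma s = a) /\
      (forall s', ~ x s' /\ config S (fun s'' => x s'' \/ s'' = s') /\ sigma s' = a ->
         s' = s).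

Definition strategy (S A : ESP) (sigma : Map S A) : Prop :=
  courteous sigma /\ receptive sigma.

Definition downsets_total (X : Type) (R : X -> X -> Prop) : Prop :=
  forall s s1 s2, R s1 s -> R s2 s -> R s1 s2 \/ R s2 s1.

Definition backward_sequential (E : ESP) : Prop := downsets_total (@le E).

Definition forest (A : ESP) : Prop := downsets_total (@le A).

(** The pullback: configurations of the product stable family C(S) x C(T)
    restricted to synchronised pairs (sigma s = tau t). *)
Section Pullback.
Variables (A S T : ESP) (sigma : Map S A) (tau : Map T (dual A)).

Definition pb_config (z : ev S * ev T -> Prop) : Prop :=
  (forall p, z p -> sigma (fst p) = tau (snd p)) /\
  config S (image fst z) /\ config T (image snd z) /\
  (forall p q, z p -> z q -> fst p = fst q -> p = q) /\
  (forall p q, z p -> z q -> snd p = snd q -> p = q) /\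
  (* secured: an enumeration of z all of whose prefixes are in the family *)
  (exists l : list (ev S * ev T), NoDup l /\ (forall p, z p <-> In p l) /\
     forall k, config S (image fst (fun p => In p (firstn k l))) /\
               config T (image snd (fun p => In p (firstn k l)))).

Definition prime (z : ev S * ev T -> Prop) (p : ev S * ev T) : ev S * ev T -> Prop :=
  fun q => forall y, pb_config y -> (forall u, y u -> z u) -> y p -> y q.

Definition pb_ev : Type :=
  { P : ev S * ev T -> Prop |
    exists z p, pb_config z /\ z p /\ forall q, P q <-> prime z p q }.

Definition pb_le (P Q : pb_ev) : Prop := forall q, proj1_sig P q -> proj1_sig Q q.

End Pullback.

(* Main.v *)
Require Import Defs.
From Stdlib Require Import List Classical Lia.
Import ListNotations.
Set Implicit Arguments.
Unset Strict Implicit.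

Lemma filter_ex {X : Type} (P : X -> Prop) (l : list X) :
  exists l', (NoDup l -> NoDup l') /\ (forall x, In x l' <-> In x l /\ P x) /\
    forall k, exists k0, forall x, In x (firstn k l') <-> In x (firstn k0 l) /\ P x.
Proof.
  induction l as [|a l IH].
  - exists []. split; [intros; constructor|]. split; [simpl; tauto|].
    intro k; exists 0; destruct k; simpl; tauto.
  - destruct IH as [l' [Hnd [Hin Hfi]]]. destruct (classic (P a)) as [Pa|nPa].
    + exists (a :: l'). split.
      { intro H; inversion H; subst; constructor; [rewrite Hin; tauto | auto]. }
      split.
      { intro x; simpl; rewrite Hin; split.
        - intros [<-|[? ?]]; auto.
        - intros [[<-|?] ?]; auto. }
      intro k; destruct k as [|k]. { exists 0; simpl; tauto. }
      destruct (Hfi k) as [k0 Hk0]. exists (S k0). intro x. simpl. rewrite Hk0.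
      split; [intros [<-|[? ?]]; auto | intros [[<-|?] ?]; auto].
    + exists l'. split. { intro H; inversion H; auto. }
      split. { intro x; simpl; rewrite Hin; split; [tauto| intros [[<-|?] ?]; tauto]. }
      intro k. destruct (Hfi k) as [k0 Hk0]. exists (S k0). intro x. rewrite Hk0. simpl.
      split; [tauto| intros [[<-|?] ?]; tauto].
Qed.

Lemma filter_len {X : Type} (P : X -> Prop) (L : list X) :
  exists L', (forall x, In x L' <-> In x L /\ P x) /\ length L' <= length L /\
    ((exists a, In a L /\ ~ P a) -> length L' < length L).
Proof.
  induction L as [|y L IH].
  - exists []. split; [simpl; tauto|]. split; [simpl; lia|]. intros [a [[] _]].
  - destruct IH as [L' [Hin [Hle Hlt]]]. destruct (classic (P y)) as [Py|nPy].
    + exists (y :: L'). split.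
      { intro x; simpl; rewrite Hin; split.
        - intros [<-|[? ?]]; auto.
        - intros [[<-|?] ?]; auto. }
      simpl. split; [lia|]. intros [a [[<-|Ha] Hna]]; [contradiction|].
      assert (length L' < length L) by (apply Hlt; eauto). lia.
    + exists L'. split. { intro x; simpl; rewrite Hin; split; [tauto| intros [[<-|?] ?]; tauto]. }
      simpl; split; lia.
Qed.

Lemma config_down (E : ESP) (e : ev E) : config E (fun e' => le E e' e).
Proof.
  split; [|split].
  - destruct (down_finite E e) as [l Hl].
    destruct (filter_ex (fun e' => le E e' e) l) as [l' [_ [Hin _]]].
    exists l'. intro x. rewrite Hin. split; [split; auto|tauto].
  - intros e1 e2 H1 H2. eapply le_trans; eauto.
  - intros l Hl. assert (H: con E (l ++ [e])).
    { induction l as [|x l IH]; simpl. apply con_single.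
      apply con_down with (e' := e).
      apply IH; intros; apply Hl; simpl; auto.
      apply in_or_app; simpl; auto. apply Hl; simpl; auto. }
    apply con_sub with (l ++ [e]); auto. intros x Hx; apply in_or_app; auto.
Qed.

Lemma lt_trans' (E : ESP) a b c : lt E a b -> lt E b c -> lt E a c.
Proof.
  intros [H1 N1] [H2 N2]. split. eapply le_trans; eauto.
  intro; subst. apply N2. apply le_antisym; auto.
Qed.

Lemma exists_imm (E : ESP) (e' e : ev E) : lt E e' e -> exists e1, le E e' e1 /\ imm E e1 e.
Proof.
  intro H.
  assert (G: forall n (L : list (ev E)), length L <= n -> forall e', lt E e' e ->
    (forall x, lt E e' x -> lt E x e -> In x L) -> exists e1, le E e' e1 /\ imm E e1 e).
  { induction n as [|n IH]; intros L HL e0 H0 HB.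
    - exists e0. split. apply le_refl. split; auto.
      intros [x [Hx1 Hx2]]. specialize (HB x Hx1 Hx2). destruct L; simpl in *; [auto|lia].
    - destruct (classic (exists x, lt E e0 x /\ lt E x e)) as [[x [Hx1 Hx2]]|Hno].
      + destruct (filter_len (fun y => y <> x) L) as [L' [Hin [_ Hlt]]].
        assert (length L' < length L) by (apply Hlt; exists x; split; auto).
        destruct (IH L' ltac:(lia) x Hx2) as [e1 [He1 Hi]].
        { intros y Hy1 Hy2. apply Hin. split. apply HB; auto. eapply lt_trans'; eauto.
          intro; subst. destruct Hy1; auto. }
        exists e1. split; auto. eapply le_trans; [apply Hx1|auto].
      + exists e0. split. apply le_refl. split; auto. }
  destruct (down_finite E e) as [l Hl].
  apply (G (length l) l (le_n _) e' H). intros x _ [Hx _]. apply Hl; auto.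
Qed.

Lemma imm_below (E : ESP) (HS : downsets_total (le E)) s1 s s' :
  imm E s1 s -> lt E s' s -> le E s' s1.
Proof.
  intros [[Hl1 N1] Hno] [Hl N].
  destruct (HS s s' s1 Hl Hl1) as [H|H]; auto.
  destruct (classic (s1 = s')) as [->|Hne]. apply le_refl.
  exfalso. apply Hno. exists s'. split; split; auto.
Qed.

Lemma imm_unique (E : ESP) (HS : downsets_total (le E)) s1 s1' s :
  imm E s1 s -> imm E s1' s -> s1 = s1'.
Proof.
  intros H1 H2. apply le_antisym.
  - apply (imm_below HS H2). apply H1.
  - apply (imm_below HS H1). apply H2.
Qed.

Definition stp (S T : ESP) (u v : ev S * ev T) :=
  le S (fst u) (fst v) \/ le T (snd u) (snd v).

Inductive Cl (S T : ESP) (z : ev S * ev T -> Prop) (r : ev S * ev T) : ev S * ev T -> Prop :=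
| Cl_base : Cl z r r
| Cl_step : forall u v, z u -> Cl z r v -> stp u v -> Cl z r u.

Lemma Cl_z (S T : ESP) (z : ev S * ev T -> Prop) r u : z r -> Cl z r u -> z u.
Proof. intros Hr H; induction H; auto. Qed.

Lemma Cl_trans (S T : ESP) (z : ev S * ev T -> Prop) a b c :
  Cl z a b -> Cl z b c -> Cl z a c.
Proof. intros H1 H2; induction H2; auto. eapply Cl_step; eauto. Qed.

Lemma img_down (E : ESP) (P : Type) (f : P -> ev E) (Y : P -> Prop) u e :
  config E (image f Y) -> Y u -> le E e (f u) -> exists v, Y v /\ f v = e.
Proof.
  intros [_ [Hd _]] Hu Hle.
  assert (Hi : image f Y (f u)) by (exists u; auto).
  destruct (Hd e (f u) Hi Hle) as [v [Hv Hfv]]. eauto.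
Qed.

Lemma cfg_proj (E : ESP) (P : Type) (f : P -> ev E) (X Y : P -> Prop) (L : list P) :
  config E (image f Y) -> (forall u, X u -> Y u) ->
  (forall u v, X u -> Y v -> le E (f v) (f u) -> X v) ->
  (forall u, X u <-> In u L) -> config E (image f X).
Proof.
  intros HY HXY Hcl HL. split; [|split].
  - exists (map f L). intro e. rewrite in_map_iff. split.
    + intros [u [Hu Hf]]. exists u. split; auto. apply HL; auto.
    + intros [u [Hf Hu]]. exists u. split; auto. apply HL; auto.
  - intros e e' [u [Hu Hfu]] Hle. subst e'.
    destruct (img_down HY (HXY _ Hu) Hle) as [v [Hv Hfv]].
    exists v; split; auto. apply Hcl with u; auto. rewrite Hfv; auto.
  - intros l Hl. destruct HY as [_ [_ Hc]]. apply Hc.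
    intros e He. destruct (Hl e He) as [u [Hu Hfu]]. exists u; auto.
Qed.

Lemma C_in (S T : ESP) (z Y : ev S * ev T -> Prop) r :
  (forall p q, z p -> z q -> fst p = fst q -> p = q) ->
  (forall p q, z p -> z q -> snd p = snd q -> p = q) ->
  (forall u, Y u -> z u) -> config S (image fst Y) -> config T (image snd Y) ->
  Y r -> forall u, Cl z r u -> Y u.
Proof.
  intros Hi1 Hi2 HYz HS HT Hr u H. induction H as [|u v Hzu Hv IH Hst]; auto.
  destruct Hst as [Hl|Hl].
  - destruct (img_down HS IH Hl) as [w [Hw Hfw]].
    rewrite (Hi1 u w Hzu (HYz _ Hw) (eq_sym Hfw)); auto.
  - destruct (img_down HT IH Hl) as [w [Hw Hfw]].
    rewrite (Hi2 u w Hzu (HYz _ Hw) (eq_sym Hfw)); auto.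
Qed.

Lemma firstn_in {X : Type} k (l : list X) x : In x (firstn k l) -> In x l.
Proof.
  revert l; induction k; intros l H; [destruct H|]. destruct l; [destruct H|].
  simpl in *. destruct H; auto.
Qed.

Lemma firstn_step {X : Type} k (l : list X) x y :
  In x (firstn (Datatypes.S k) l) -> ~ In x (firstn k l) ->
  In y (firstn (Datatypes.S k) l) -> ~ In y (firstn k l) -> x = y.
Proof.
  revert k; induction l as [|a l IH]; intros k H1 H2 H3 H4; [destruct H1|].
  destruct k as [|k].
  - simpl in *. destruct H1 as [<-|[]]; destruct H3 as [<-|[]]; auto.
  - simpl in *. destruct H1 as [<-|H1]; [exfalso; auto|].
    destruct H3 as [<-|H3]; [exfalso; auto|]. eapply IH; eauto.
Qed.

Lemma C_config (A S T : ESP) (sigma : Map S A) (tau : Map T (dual A)) z r :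
  pb_config sigma tau z -> z r -> pb_config sigma tau (Cl z r).
Proof.
  intros [Hsy [HcS [HcT [Hi1 [Hi2 [l [Hnd [Hl Hpre]]]]]]]] Hr.
  destruct (filter_ex (Cl z r) l) as [l' [Hnd' [Hin' Hfi']]].
  assert (HCl : forall u, Cl z r u <-> In u l').
  { intro u. rewrite Hin', <- Hl. split; [intro H; split; [eapply Cl_z; eauto|auto]|tauto]. }
  split; [intros p Hp; apply Hsy; eapply Cl_z; eauto|].
  split.
  { apply cfg_proj with (Y := z) (L := l'); auto.
    - intros; eapply Cl_z; eauto.
    - intros u v Hu Hv Hle. apply Cl_step with u; auto. left; auto. }
  split.
  { apply cfg_proj with (Y := z) (L := l'); auto.
    - intros; eapply Cl_z; eauto.
    - intros u v Hu Hv Hle. apply Cl_step with u; auto. right; auto. }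
  split; [intros; apply Hi1; auto; eapply Cl_z; eauto|].
  split; [intros; apply Hi2; auto; eapply Cl_z; eauto|].
  exists l'. split; auto. split; auto. intro k.
  destruct (Hfi' k) as [k0 Hk0]. destruct (Hpre k0) as [HS0 HT0]. split.
  - apply cfg_proj with (Y := fun p => In p (firstn k0 l)) (L := firstn k l'); auto.
    + intros u Hu. apply Hk0; auto.
    + intros u v Hu Hv Hle. apply Hk0. apply Hk0 in Hu. split; auto.
      apply Cl_step with u; [apply Hl; eapply firstn_in; eauto|tauto|left; auto].
    + tauto.
  - apply cfg_proj with (Y := fun p => In p (firstn k0 l)) (L := firstn k l'); auto.
    + intros u Hu. apply Hk0; auto.
    + intros u v Hu Hv Hle. apply Hk0. apply Hk0 in Hu. split; auto.
      apply Cl_step with u; [apply Hl; eapply firstn_in; eauto|tauto|right; auto].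
    + tauto.
Qed.

Lemma prime_C (A S T : ESP) (sigma : Map S A) (tau : Map T (dual A)) z r :
  pb_config sigma tau z -> z r -> forall u, prime sigma tau z r u <-> Cl z r u.
Proof.
  intros Hz Hr u. split.
  - intro H. apply H. apply C_config; auto. intros; eapply Cl_z; eauto. constructor.
  - intros HC y Hy Hyz Hyr.
    destruct Hz as [_ [_ [_ [Hi1 [Hi2 _]]]]].
    destruct Hy as [_ [HS [HT _]]].
    eapply C_in with (Y := y); eauto.
Qed.

Lemma first_step (S T : ESP) (z : ev S * ev T -> Prop) r u :
  Cl z r u -> u = r \/ exists w, z w /\ stp w r /\ w <> r /\ Cl z w u.
Proof.
  intro H; induction H as [|u v Hzu Hv IH Hst]; auto.
  destruct IH as [->|[w [Hw [Hs [Hn Hc]]]]].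
  - destruct (classic (u = r)) as [->|Hne]; auto.
    right; exists u; repeat split; auto. constructor.
  - right; exists w; repeat split; auto. eapply Cl_step; eauto.
Qed.

Lemma polarity (A S T : ESP) (sigma : Map S A) (tau : Map T (dual A)) z p u1 u2 :
  strategy sigma -> strategy tau ->
  backward_sequential S -> backward_sequential T ->
  pb_config sigma tau z -> z p -> z u1 -> z u2 ->
  imm S (fst u1) (fst p) -> imm T (snd u2) (snd p) ->
  stp u1 u2 \/ stp u2 u1.
Proof.
  intros [Hcs _] [Hct _] HS HT Hz Hp H1 H2 Hi1 Hi2.
  destruct Hz as [Hsy [HcS [HcT [Hj1 [Hj2 _]]]]].
  pose proof (Hsy p Hp) as Ep. pose proof (Hsy u1 H1) as E1. pose proof (Hsy u2 H2) as E2.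
  destruct (pol A (sigma (fst p))) eqn:Hpp.
  - assert (Hpt : pol T (snd p) = false).
    { rewrite <- (map_pol tau). simpl. rewrite <- Ep, Hpp. reflexivity. }
    destruct (Hct _ _ Hi2 (or_intror Hpt)) as [[Hle Hne] _].
    change (le A (tau (snd u2)) (tau (snd p))) in Hle.
    rewrite <- Ep, <- E2 in Hle. rewrite <- Ep, <- E2 in Hne.
    pose proof (map_config sigma (config_down (fst p))) as Hc.
    destruct (img_down Hc (le_refl S (fst p)) Hle) as [s'' [Hs'' Hf]].
    assert (Hfz : image fst z (fst p)) by (exists p; auto).
    assert (Hs''z : image fst z s'').
    { destruct HcS as [_ [Hd _]]. eapply Hd; eauto. }
    assert (Heq : s'' = fst u2).
    { apply (map_locinj sigma s'' (fst u2) HcS Hs''z); auto. exists u2; auto. }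
    subst s''. right. left. apply (imm_below HS Hi1). split; auto.
    intro Heq; apply Hne; rewrite Heq; auto.
  - assert (Hps : pol S (fst p) = false) by (rewrite <- (map_pol sigma); auto).
    destruct (Hcs _ _ Hi1 (or_intror Hps)) as [[Hle Hne] _].
    rewrite Ep, E1 in Hle. rewrite Ep, E1 in Hne.
    change (le (dual A) (tau (snd u1)) (tau (snd p))) in Hle.
    pose proof (map_config tau (config_down (snd p))) as Hc.
    destruct (img_down Hc (le_refl T (snd p)) Hle) as [t'' [Ht'' Hf]].
    assert (Hfz : image snd z (snd p)) by (exists p; auto).
    assert (Ht''z : image snd z t'').
    { destruct HcT as [_ [Hd _]]. eapply Hd; eauto. }
    assert (Heq : t'' = snd u1).
    { apply (map_locinj tau t'' (snd u1) HcT Ht''z); auto. exists u1; auto. }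
    subst t''. left. right. apply (imm_below HT Hi2). split; auto.
    intro Heq; apply Hne; rewrite Heq; auto.
Qed.

Definition cand (S T : ESP) (z : ev S * ev T -> Prop) p q :=
  z q /\ (imm S (fst q) (fst p) \/ imm T (snd q) (snd p)).

Lemma get_cand (A S T : ESP) (sigma : Map S A) (tau : Map T (dual A)) z p w :
  pb_config sigma tau z -> z p -> z w -> stp w p -> w <> p ->
  exists q, cand z p q /\ Cl z q w.
Proof.
  intros Hz Hp Hw Hs Hn.
  destruct Hz as [_ [HcS [HcT [Hj1 [Hj2 _]]]]].
  destruct Hs as [Hl|Hl].
  - assert (lt S (fst w) (fst p)) as Hlt.
    { split; [exact Hl|]; intro E; apply Hn; apply Hj1; auto. }
    destruct (exists_imm Hlt) as [s1 [Hs1 Hi]].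
    destruct (img_down HcS Hp (proj1 (proj1 Hi))) as [q [Hq Hfq]].
    exists q. split. split; auto. left; rewrite Hfq; auto.
    apply Cl_step with q; auto. constructor. left; rewrite Hfq; auto.
  - assert (lt T (snd w) (snd p)) as Hlt.
    { split; [exact Hl|]; intro E; apply Hn; apply Hj2; auto. }
    destruct (exists_imm Hlt) as [s1 [Hs1 Hi]].
    destruct (img_down HcT Hp (proj1 (proj1 Hi))) as [q [Hq Hfq]].
    exists q. split. split; auto. right; rewrite Hfq; auto.
    apply Cl_step with q; auto. constructor. right; rewrite Hfq; auto.
Qed.

Lemma cand_cmp (A S T : ESP) (sigma : Map S A) (tau : Map T (dual A)) z p q1 q2 :
  strategy sigma -> strategy tau ->
  backward_sequential S -> backward_sequential T ->
  pb_config sigma tau z -> z p -> cand z p q1 -> cand z p q2 ->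
  Cl z q1 q2 \/ Cl z q2 q1.
Proof.
  intros Hs Ht HS HT Hz Hp [Hq1 C1] [Hq2 C2].
  pose proof Hz as Hz'. destruct Hz' as [_ [_ [_ [Hj1 [Hj2 _]]]]].
  destruct C1 as [C1|C1]; destruct C2 as [C2|C2].
  - rewrite (Hj1 q1 q2 Hq1 Hq2 (imm_unique HS C1 C2)). left; constructor.
  - destruct (polarity Hs Ht HS HT Hz Hp Hq1 Hq2 C1 C2) as [H|H].
    + right. apply Cl_step with q2; auto; constructor.
    + left. apply Cl_step with q1; auto; constructor.
  - destruct (polarity Hs Ht HS HT Hz Hp Hq2 Hq1 C2 C1) as [H|H].
    + left. apply Cl_step with q1; auto; constructor.
    + right. apply Cl_step with q2; auto; constructor.
  - rewrite (Hj2 q1 q2 Hq1 Hq2 (imm_unique HT C1 C2)). left; constructor.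
Qed.

Lemma cand_stp (S T : ESP) (z : ev S * ev T -> Prop) p q :
  cand z p q -> stp q p /\ q <> p.
Proof.
  intros [_ [H|H]]; destruct H as [[Hl Hn] _]; split; auto; try (left; auto; fail);
    try (right; auto; fail); intro E; apply Hn; rewrite E; auto.
Qed.

Lemma core (A S T : ESP) (sigma : Map S A) (tau : Map T (dual A)) z (l : list (ev S * ev T)) :
  strategy sigma -> strategy tau ->
  backward_sequential S -> backward_sequential T ->
  pb_config sigma tau z -> (forall p, z p <-> In p l) ->
  (forall k, config S (image fst (fun p => In p (firstn k l))) /\
             config T (image snd (fun p => In p (firstn k l)))) ->
  forall k p, In p (firstn k l) -> forall q1 q2, Cl z p q1 -> Cl z p q2 ->
    Cl z q1 q2 \/ Cl z q2 q1.
Proof.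
  intros Hs Ht HS HT Hz Hl Hpre k. induction k as [|k IH]; intros p Hp q1 q2 H1 H2.
  - destruct Hp.
  - destruct (classic (In p (firstn k l))) as [Hk|Hk]; [eapply IH; eauto|].
    assert (Hzp : z p) by (apply Hl; eapply firstn_in; eauto).
    destruct (first_step H1) as [->|[w1 [Hzw1 [Hs1 [Hn1 Hc1]]]]]; [left; auto|].
    destruct (first_step H2) as [->|[w2 [Hzw2 [Hs2 [Hn2 Hc2]]]]]; [right; auto|].
    destruct (get_cand Hz Hzp Hzw1 Hs1 Hn1) as [c1 [Hc1' Hcw1]].
    destruct (get_cand Hz Hzp Hzw2 Hs2 Hn2) as [c2 [Hc2' Hcw2]].
    assert (G : exists q, cand z p q /\ Cl z q q1 /\ Cl z q q2).
    { destruct (cand_cmp Hs Ht HS HT Hz Hzp Hc1' Hc2') as [H|H].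
      - exists c1. split; [exact Hc1'|split].
        + exact (Cl_trans Hcw1 Hc1).
        + exact (Cl_trans H (Cl_trans Hcw2 Hc2)).
      - exists c2. split; [exact Hc2'|split].
        + exact (Cl_trans H (Cl_trans Hcw1 Hc1)).
        + exact (Cl_trans Hcw2 Hc2). }
    destruct G as [q [Hq [Hq1 Hq2]]].
    destruct (cand_stp Hq) as [Hsq Hnq].
    assert (HqP : Cl z p q) by (apply Cl_step with p; auto; [apply Hq|constructor]).
    pose proof Hz as Hz'. destruct Hz' as [_ [_ [_ [Hj1 [Hj2 _]]]]].
    destruct (Hpre (Datatypes.S k)) as [HS1 HT1].
    assert (Hin : In q (firstn (Datatypes.S k) l)).
    { apply (C_in Hj1 Hj2 (Y := fun x => In x (firstn (Datatypes.S k) l)) (r := p)); auto.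
      intros; apply Hl; eapply firstn_in; eauto. }
    destruct (classic (In q (firstn k l))) as [Hqk|Hqk].
    + eapply IH; eauto.
    + exfalso. apply Hnq. eapply firstn_step; eauto.
Qed.

Lemma transfer (A S T : ESP) (sigma : Map S A) (tau : Map T (dual A)) z z1 q1 :
  pb_config sigma tau z -> pb_config sigma tau z1 -> z1 q1 ->
  (forall u, Cl z1 q1 u -> z u) -> forall u, Cl z1 q1 u <-> Cl z q1 u.
Proof.
  intros Hz Hz1 Hq Hsub u. split.
  - intro H. induction H as [|u v Hzu Hv IH Hst]; [constructor|].
    apply Cl_step with v; auto. apply Hsub. eapply Cl_step; eauto.
  - intro H. induction H as [|u v Hzu Hv IH Hst]; [constructor|].
    destruct Hz as [_ [_ [_ [Hj1 [Hj2 _]]]]].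
    destruct Hz1 as [_ [HcS [HcT _]]].
    assert (Hv1 : z1 v) by (eapply Cl_z; eauto).
    destruct Hst as [Hl|Hl].
    + destruct (img_down HcS Hv1 Hl) as [u' [Hu' Hf]].
      assert (Hc' : Cl z1 q1 u') by (apply Cl_step with v; auto; left; rewrite Hf; auto).
      rewrite (Hj1 u u' Hzu (Hsub _ Hc') (eq_sym Hf)). auto.
    + destruct (img_down HcT Hv1 Hl) as [u' [Hu' Hf]].
      assert (Hc' : Cl z1 q1 u') by (apply Cl_step with v; auto; right; rewrite Hf; auto).
      rewrite (Hj2 u u' Hzu (Hsub _ Hc') (eq_sym Hf)). auto.
Qed.

Theorem mainTheorem12 (A S T : ESP) (sigma : Map S A) (tau : Map T (dual A)) :
  forest A ->
  strategy sigma -> strategy tau ->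
  backward_sequential S -> backward_sequential T ->
  downsets_total (@pb_le A S T sigma tau).
Proof.
  intros HA Hs Ht HS HT P Q1 Q2 H1 H2.
  destruct P as [P [z [p [Hz [Hzp HP]]]]].
  destruct Q1 as [Q1 [z1 [q1 [Hz1 [Hzq1 HQ1]]]]].
  destruct Q2 as [Q2 [z2 [q2 [Hz2 [Hzq2 HQ2]]]]].
  unfold pb_le in *; simpl in *.
  assert (EP : forall u, P u <-> Cl z p u) by (intro u; rewrite HP; apply prime_C; auto).
  assert (E1 : forall u, Q1 u <-> Cl z1 q1 u) by (intro u; rewrite HQ1; apply prime_C; auto).
  assert (E2 : forall u, Q2 u <-> Cl z2 q2 u) by (intro u; rewrite HQ2; apply prime_C; auto).
  assert (S1 : forall u, Cl z1 q1 u -> Cl z p u)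
    by (intros u H; apply EP, H1, E1, H).
  assert (S2 : forall u, Cl z2 q2 u -> Cl z p u)
    by (intros u H; apply EP, H2, E2, H).
  assert (T1 := transfer Hz Hz1 Hzq1 (fun u H => Cl_z Hzp (S1 u H))).
  assert (T2 := transfer Hz Hz2 Hzq2 (fun u H => Cl_z Hzp (S2 u H))).
  pose proof Hz as Hz'. destruct Hz' as [_ [_ [_ [_ [_ [l [_ [Hl Hpre]]]]]]]].
  assert (Hpl : In p (firstn (length l) l)) by (rewrite firstn_all; apply Hl; auto).
  destruct (core Hs Ht HS HT Hz Hl Hpre Hpl (S1 _ (Cl_base _ _))
              (S2 _ (Cl_base _ _))) as [H|H].
  - right. intros u Hu. apply E1, T1. apply E2, T2 in Hu. eapply Cl_trans; eauto.
  - left. intros u Hu. apply E2, T2. apply E1, T1 in Hu. eapply Cl_trans; eauto.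
Qed.
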